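(* There is an absolute constant $C_1$ such that for all $p\in(0,0.1)$, with $q=-\log(1-p)$, $A=\lceil 1/\sqrt q\rceil$, $B=\lfloor q^{-1}\log q^{-1}\rfloor$, $$\int_{Aq}^{Bq} g(z)\,dz\ge \frac{\pi^2}{18}-C_1\sqrt q\,\log q^{-1}.$$
   Context: $\beta(u)=\frac{u+\sqrt{u(4-3u)}}{2}$ and $g(z)=-\log\beta(1-e^{-z})$ for $z>0$. *)

(* Defs.v *)
From Stdlib Require Import Reals.
From Coquelicot Require Import Coquelicot.
Open Scope R_scope.

Definition beta (u : R) : R := (u + sqrt (u * (4 - 3 * u))) / 2.

Definition g (z : R) : R := - ln (beta (1 - exp (- z))).

(* floor and ceiling as integers: Int_part r = up r - 1 is the floor *)
Definition floorZ (x : R) : Z := Int_part x.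
Definition ceilZ (x : R) : Z := (- Int_part (- x))%Z.

(* Main.v *)
Require Import Defs.
From Stdlib Require Import Reals Lra Lia.
From Coquelicot Require Import Coquelicot.
Open Scope R_scope.

Ltac toR := match goal with |- ?x = ?y => change (@eq R x y) end.
Ltac fixINR := repeat match goal with |- context [match ?k with O => 1 | S _ => INR ?k + 1 end] => change (match k with O => 1 | S _ => INR k + 1 end) with (INR (S k)) end.

Lemma FTC (F f : R -> R) a b : a <= b ->
  (forall x, a <= x <= b -> is_derive F x (f x)) ->
  (forall x, a <= x <= b -> continuous f x) ->
  RInt f a b = F b - F a.
Proof.
  intros Hab HD HC. apply is_RInt_unique.
  apply (is_RInt_derive F f a b).
  - intros x Hx. rewrite Rmin_left in Hx by lra. rewrite Rmax_right in Hx by lra. auto.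
  - intros x Hx. rewrite Rmin_left in Hx by lra. rewrite Rmax_right in Hx by lra. auto.
Qed.

Lemma ex_RInt_cont (f : R -> R) a b : a <= b ->
  (forall x, a <= x <= b -> continuous f x) -> ex_RInt f a b.
Proof.
  intros Hab HC. apply (@ex_RInt_continuous R_CompleteNormedModule). intros x Hx.
  rewrite Rmin_left in Hx by lra. rewrite Rmax_right in Hx by lra. auto.
Qed.

Lemma mono (F f : R -> R) a b : a <= b ->
  (forall x, a <= x <= b -> is_derive F x (f x)) ->
  (forall x, a <= x <= b -> continuous f x) ->
  (forall x, a < x < b -> 0 <= f x) -> F a <= F b.
Proof.
  intros Hab HD HC Hp.
  assert (H := FTC F f a b Hab HD HC).
  assert (0 <= RInt f a b). { apply RInt_ge_0; auto. apply ex_RInt_cont; auto. }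
  lra.
Qed.

Lemma RInt_lin (f h : R -> R) a b (al be : R) : ex_RInt f a b -> ex_RInt h a b ->
  RInt (fun x => al * f x + be * h x) a b = al * RInt f a b + be * RInt h a b.
Proof.
  intros Hf Hh.
  assert (H := is_RInt_plus _ _ _ _ _ _ (is_RInt_scal _ _ _ al _ (RInt_correct _ _ _ Hf)) (is_RInt_scal _ _ _ be _ (RInt_correct _ _ _ Hh))).
  apply is_RInt_unique in H. exact H.
Qed.

Lemma cont_of_der (f : R -> R) x : ex_derive f x -> continuous f x.
Proof. apply (@ex_derive_continuous R_AbsRing R_NormedModule). Qed.

Lemma RInt_lin2 (f h : R -> R) a b (al be : R) : ex_RInt f a b -> ex_RInt h a b ->
  RInt (fun x => al * f x - be * h x) a b = al * RInt f a b - be * RInt h a b.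
Proof.
  intros Hf Hh. rewrite (RInt_ext _ (fun x => al * f x + (- be) * h x)).
  - rewrite RInt_lin; auto. toR; ring.
  - intros; toR; ring.
Qed.

Lemma ex_lin (f h : R -> R) a b (al be : R) : ex_RInt f a b -> ex_RInt h a b ->
  ex_RInt (fun x => al * f x + be * h x) a b.
Proof.
  intros Hf Hh. eexists.
  exact (is_RInt_plus _ _ _ _ _ _ (is_RInt_scal _ _ _ al _ (RInt_correct _ _ _ Hf)) (is_RInt_scal _ _ _ be _ (RInt_correct _ _ _ Hh))).
Qed.

Lemma sin2 x : sin x ^ 2 = 1 - cos x ^ 2.
Proof. pose proof (sin2_cos2 x). unfold Rsqr in H. nra. Qed.

Lemma der1 k x : is_derive (fun x => sin x * cos x ^ S k) x
  (INR (S (S k)) * cos x ^ S (S k) - INR (S k) * cos x ^ k).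
Proof.
  auto_derive. constructor. fixINR. rewrite !S_INR. simpl.
  replace (sin x * (1 * - sin x * ((INR k + 1) * cos x ^ k))) with (- (INR k + 1) * cos x ^ k * sin x ^ 2) by ring.
  rewrite sin2. ring.
Qed.

Lemma der2 k x : is_derive (fun x => x * cos x ^ S (S k) + INR (S (S k)) / 2 * x^2 * sin x * cos x ^ S k) x
  (cos x ^ S (S k) + INR (S (S k)) / 2 * INR (S (S k)) * x^2 * cos x ^ S (S k)
   - INR (S (S k)) / 2 * INR (S k) * x^2 * cos x ^ k).
Proof.
  auto_derive. constructor. fixINR. rewrite !S_INR. simpl.
  replace (sin x * sin x) with (sin x ^ 2) by ring.
  ring_simplify. rewrite sin2. field.
Qed.

Definition Ic (n : nat) : R := RInt (fun x => cos x ^ (2*n)) 0 (PI/2).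
Definition Jc (n : nat) : R := RInt (fun x => x^2 * cos x ^ (2*n)) 0 (PI/2).

Lemma PI2_pos : 0 < PI/2.
Proof. pose proof PI_RGT_0. lra. Qed.

Lemma cont_cosk k x : continuous (fun x => cos x ^ k) x.
Proof. apply cont_of_der. auto_derive. auto. Qed.
Lemma cont_x2cosk k x : continuous (fun x => x^2 * cos x ^ k) x.
Proof. apply cont_of_der. auto_derive. auto. Qed.

Lemma exI k : ex_RInt (fun x => cos x ^ k) 0 (PI/2).
Proof. apply ex_RInt_cont. pose proof PI2_pos; lra. intros; apply cont_cosk. Qed.
Lemma exJ k : ex_RInt (fun x => x^2 * cos x ^ k) 0 (PI/2).
Proof. apply ex_RInt_cont. pose proof PI2_pos; lra. intros; apply cont_x2cosk. Qed.

Lemma two_S m : (2 * S m = S (S (2 * m)))%nat.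
Proof. lia. Qed.

Lemma cont_d1 k x : continuous (fun x => INR (S (S k)) * cos x ^ S (S k) - INR (S k) * cos x ^ k) x.
Proof. apply cont_of_der; auto_derive; auto. Qed.
Lemma cont_d2 k x : continuous (fun x => cos x ^ S (S k) + INR (S (S k)) / 2 * INR (S (S k)) * x^2 * cos x ^ S (S k)
   - INR (S (S k)) / 2 * INR (S k) * x^2 * cos x ^ k) x.
Proof. apply cont_of_der; auto_derive; auto. Qed.

Lemma pow0S k : 0 ^ S k = 0.
Proof. simpl; ring. Qed.

Lemma I_rec m : INR (2 * S m) * Ic (S m) = INR (2*m+1) * Ic m.
Proof.
  unfold Ic. rewrite two_S.
  assert (H := FTC _ _ 0 (PI/2) (Rlt_le _ _ PI2_pos) (fun x _ => der1 (2*m) x) (fun x _ => cont_d1 (2*m) x)).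
  rewrite RInt_lin2 in H by apply exI.
  rewrite cos_PI2, sin_0, !pow0S in H.
  replace (2*m+1)%nat with (S (2*m)) by lia. lra.
Qed.

Lemma J_rec m : Ic (S m) + 2 * INR (S m) ^ 2 * Jc (S m) = INR (S m) * INR (2*m+1) * Jc m.
Proof.
  unfold Ic, Jc. rewrite two_S.
  set (k := (2*m)%nat).
  set (c1 := INR (S (S k)) / 2 * INR (S (S k))).
  set (c2 := INR (S (S k)) / 2 * INR (S k)).
  assert (H := FTC _ _ 0 (PI/2) (Rlt_le _ _ PI2_pos) (fun x _ => der2 k x) (fun x _ => cont_d2 k x)).
  fold c1 c2 in H.
  rewrite (RInt_ext _ (fun x => 1 * (1 * cos x ^ S (S k) + c1 * (x ^ 2 * cos x ^ S (S k)))
      - c2 * (x ^ 2 * cos x ^ k))) in H by (intros; toR; ring).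
  rewrite (RInt_lin2 (fun x => 1 * cos x ^ S (S k) + c1 * (x ^ 2 * cos x ^ S (S k))) (fun x => x ^ 2 * cos x ^ k)) in H.
  2: { apply ex_lin. apply exI. apply exJ. }
  2: apply exJ.
  rewrite (RInt_lin (fun x => cos x ^ S (S k)) (fun x => x ^ 2 * cos x ^ S (S k))) in H; [| exact (exI _) | exact (exJ _)].
  rewrite cos_PI2, sin_0, !pow0S in H.
  replace (k+1)%nat with (S k) by lia.
  assert (E1 : INR (S (S k)) = 2 * INR (S m)) by (unfold k; rewrite <- two_S, mult_INR; reflexivity).
  assert (E2 : INR (S k) = 2 * INR (S m) - 1) by (rewrite S_INR in E1; lra).
  assert (C1 : c1 = 2 * INR (S m) ^ 2) by (unfold c1; rewrite E1; field).
  assert (C2 : c2 = INR (S m) * (2 * INR (S m) - 1)) by (unfold c2; rewrite E1, E2; field).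
  rewrite C1, C2 in H. rewrite E2. toR. match type of H with ?x = ?y => change (@eq R x y) in H end. lra.
Qed.

Lemma I0 : Ic 0 = PI/2.
Proof.
  unfold Ic. simpl.
  rewrite (FTC (fun x => x) (fun _ => 1) 0 (PI/2)). lra. pose proof PI2_pos; lra.
  intros; auto_derive; auto. intros; apply continuous_const.
Qed.

Lemma J0 : Jc 0 = (PI/2)^3/3.
Proof.
  unfold Jc. simpl.
  rewrite (FTC (fun x => x^3/3) (fun x => x * (x * 1) * 1) 0 (PI/2)). toR; field. pose proof PI2_pos; lra.
  intros; auto_derive; auto. toR; field. intros; apply cont_of_der; auto_derive; auto.
Qed.

Lemma Ipos n : 0 < Ic n.
Proof.
  induction n.
  - rewrite I0. apply PI2_pos.
  - assert (H := I_rec n).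
    assert (0 < INR (2 * S n)) by (apply lt_0_INR; lia).
    assert (0 < INR (2 * n + 1)) by (apply lt_0_INR; lia).
    assert (Ic (S n) = INR (2*n+1) * Ic n / INR (2 * S n)) by (rewrite <- H; field; lra).
    rewrite H2. apply Rdiv_lt_0_compat; auto. apply Rmult_lt_0_compat; auto.
Qed.

Lemma xcos_le_sin x : 0 <= x <= PI/2 -> x * cos x <= sin x.
Proof.
  intros Hx.
  assert (H := mono (fun t => sin t - t * cos t) (fun t => t * sin t) 0 x (proj1 Hx)).
  cbv beta in H. rewrite sin_0 in H. cut (0 - 0 * cos 0 <= sin x - x * cos x). lra.
  apply H.
  - intros t _; auto_derive; auto. ring.
  - intros t _; apply cont_of_der; auto_derive; auto.
  - intros t Ht. apply Rmult_le_pos. lra. apply sin_ge_0. lra. pose proof PI2_Rlt_PI. lra.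
Qed.

Lemma J_bound m : Jc (S m) <= Ic m - Ic (S m).
Proof.
  unfold Jc, Ic.
  rewrite <- (Rmult_1_l (RInt (fun x => cos x ^ (2*m)) 0 (PI/2))).
  rewrite <- (Rmult_1_l (RInt (fun x => cos x ^ (2*S m)) 0 (PI/2))).
  rewrite <- RInt_lin2; [| exact (exI _) | exact (exI _)].
  apply RInt_le. pose proof PI2_pos; lra. exact (exJ _).
  apply (ex_RInt_ext (fun x => 1 * cos x ^ (2*m) + (-1) * cos x ^ (2 * S m))). intros; toR; ring.
  apply ex_lin; exact (exI _).
  intros x Hx. rewrite two_S.
  assert (Hc : 0 <= cos x) by (apply cos_ge_0; lra).
  assert (Hxc := xcos_le_sin x ltac:(lra)).
  assert (Hk : 0 <= cos x ^ (2*m)) by (apply pow_le; auto).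
  assert (0 <= x * cos x) by (apply Rmult_le_pos; lra).
  replace (x ^ 2 * cos x ^ S (S (2 * m))) with ((x * cos x)^2 * cos x ^ (2*m)) by (simpl; ring).
  replace (1 * cos x ^ (2 * m) - 1 * cos x ^ S (S (2 * m))) with (sin x ^2 * cos x ^ (2*m)) by (rewrite sin2; simpl; ring).
  apply Rmult_le_compat_r; auto. apply pow_incr; lra.
Qed.

Fixpoint Sq (n : nat) : R := match n with O => 0 | S n => Sq n + 1 / (INR (S n))^2 end.

Lemma tele n : Sq n = PI^2/6 - 2 * Jc n / Ic n.
Proof.
  induction n.
  - simpl. rewrite I0, J0. field. pose proof PI_RGT_0; lra.
  - change (Sq (S n)) with (Sq n + 1 / (INR (S n))^2). rewrite IHn.
    assert (HI := I_rec n). assert (HJ := J_rec n).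
    assert (P0 := Ipos n). assert (P1 := Ipos (S n)).
    assert (HJ' : Jc (S n) = (INR (S n) * INR (2*n+1) * Jc n - Ic (S n)) / (2 * INR (S n)^2)).
    { rewrite <- HJ. field. apply not_0_INR; lia. }
    rewrite HJ'.
    assert (HI' : Ic (S n) = INR (2*n+1) * Ic n / INR (2 * S n)).
    { rewrite <- HI. field. apply not_0_INR; lia. }
    rewrite HI'. rewrite (mult_INR 2 (S n)), plus_INR, mult_INR, S_INR. simpl INR.
    field. pose proof (pos_INR n). repeat split; lra.
Qed.

Lemma basel m : Sq (S m) >= PI^2/6 - 2 / INR (2*m+1).
Proof.
  rewrite tele. assert (H := J_bound m). assert (HI := I_rec m).
  assert (P0 := Ipos m). assert (P1 := Ipos (S m)).
  assert (0 < INR (2*m+1)) by (apply lt_0_INR; lia).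
  assert (Ic m = INR (2 * S m) * Ic (S m) / INR (2*m+1)) by (rewrite HI; field; lra).
  assert (INR (2 * S m) = INR (2*m+1) + 1) by (rewrite two_S, <- plus_n_Sm, <- plus_n_O; rewrite S_INR; replace (2*m+1)%nat with (S (2*m)) by lia; rewrite S_INR; ring).
  rewrite H1, H2 in H.
  assert (Jc (S m) <= Ic (S m) / INR (2*m+1)) by (replace (Ic (S m) / INR (2*m+1)) with ((INR (2 * m + 1) + 1) * Ic (S m) / INR (2 * m + 1) - Ic (S m)) by (field; lra); lra).
  apply Rle_ge. unfold Rminus. apply Rplus_le_compat_l. apply Ropp_le_contravar.
  unfold Rdiv. rewrite Rmult_assoc. apply Rmult_le_compat_l. lra.
  apply (Rmult_le_reg_r (Ic (S m))). auto. rewrite Rmult_assoc, Rinv_l by lra.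
  replace (/ INR (2*m+1) * Ic (S m)) with (Ic (S m) / INR (2*m+1)) by (field; lra). lra.
Qed.

Fixpoint Pl (N : nat) (y : R) : R := match N with O => 0 | S n => Pl n y + y^(S n) / INR (S n) end.
Fixpoint Dl (N : nat) (y : R) : R := match N with O => 0 | S n => Dl n y + y^n end.

Lemma Pl_der N y : is_derive (Pl N) y (Dl N y).
Proof.
  induction N; simpl.
  - apply (is_derive_const 0).
  - apply (is_derive_plus (Pl N) (fun y => y ^ S N / INR (S N))); auto.
    auto_derive. exact I. fixINR. toR. field. apply not_0_INR; lia.
Qed.

Lemma Dl_geom N y : Dl N y * (1 - y) = 1 - y^N.
Proof. induction N; simpl. ring. rewrite Rmult_plus_distr_r, IHN. ring. Qed.

Lemma Rl_der N y : y < 1 -> is_derive (fun y => - ln (1 - y) - Pl N y) y (y^N / (1 - y)).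
Proof.
  intros Hy.
  assert (H1 : is_derive (fun y => - ln (1 - y)) y (1 / (1 - y))).
  { auto_derive. lra. toR. field. lra. }
  assert (H2 := is_derive_minus _ _ _ _ _ H1 (Pl_der N y)).
  replace (y^N / (1 - y)) with (1 / (1 - y) - Dl N y). exact H2.
  replace (y^N) with (1 - Dl N y * (1-y)) by (rewrite Dl_geom; ring). field. lra.
Qed.

Lemma Rl_mono N y1 y2 : 0 <= y1 <= y2 -> y2 < 1 ->
  - ln (1 - y1) - Pl N y1 <= - ln (1 - y2) - Pl N y2.
Proof.
  intros H12 H2.
  apply (mono (fun y => - ln (1 - y) - Pl N y) (fun y => y^N / (1 - y))). lra.
  intros; apply Rl_der; lra.
  intros x Hx. apply cont_of_der. auto_derive. lra.
  intros x Hx. apply Rdiv_le_0_compat. apply pow_le; lra. lra.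
Qed.

Definition Tf (v : R) : R := ln (1 + v + v^2) - ln (1 + v).

Lemma T_ge N v : 0 <= v <= 1 -> Pl N (v^2) - Pl N (v^3) <= Tf v.
Proof.
  intros Hv. destruct (Req_dec v 1) as [E|E].
  - subst. unfold Tf. rewrite !pow1. replace (1+1+1) with 3 by ring. replace (1+1) with 2 by ring.
    assert (ln 2 < ln 3) by (apply ln_increasing; lra). lra.
  - assert (v < 1) by lra.
    assert (v^3 <= v^2) by (simpl; nra).
    assert (0 <= v^3) by (apply pow_le; lra).
    assert (v^2 < 1) by (simpl; nra).
    assert (HR := Rl_mono N (v^3) (v^2) ltac:(lra) ltac:(lra)).
    unfold Tf.
    assert (E3 : ln (1 - v^3) = ln (1 - v) + ln (1 + v + v^2)).
    { rewrite <- ln_mult by nra. f_equal. ring. }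
    assert (E2 : ln (1 - v^2) = ln (1 - v) + ln (1 + v)).
    { rewrite <- ln_mult by nra. f_equal. ring. }
    lra.
Qed.

Lemma pow_der k v : v <> 0 -> is_derive (fun v => v^k) v (INR k * v^k / v).
Proof.
  intros Hv. destruct k.
  - simpl. replace (0 * 1 / v) with 0 by (field; auto). apply (is_derive_const 1).
  - auto_derive. exact I. fixINR. simpl. toR. field. auto.
Qed.

Fixpoint Qs (N : nat) (v : R) : R := match N with O => 0
  | S n => Qs n v + / (2 * INR (S n)^2) * v^(2 * S n) - / (3 * INR (S n)^2) * v^(3 * S n) end.

Lemma Qs_der N v : 0 < v -> is_derive (Qs N) v ((Pl N (v^2) - Pl N (v^3)) / v).
Proof.
  intros Hv. induction N.
  - simpl. replace ((0 - 0) / v) with 0 by (field; lra). apply (is_derive_const 0).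
  - cbn [Qs Pl].
    assert (HN : INR (S N) <> 0) by (apply not_0_INR; lia).
    assert (H1 := is_derive_scal _ _ (/ (2 * INR (S N)^2)) _ (pow_der (2 * S N) v ltac:(lra))).
    assert (H2 := is_derive_scal _ _ (/ (3 * INR (S N)^2)) _ (pow_der (3 * S N) v ltac:(lra))).
    assert (H3 := is_derive_minus _ _ _ _ _ (is_derive_plus _ _ _ _ _ IHN H1) H2).
    assert (E : (Pl N (v ^ 2) + (v ^ 2) ^ S N / INR (S N) - (Pl N (v ^ 3) + (v ^ 3) ^ S N / INR (S N))) / v
      = (Pl N (v^2) - Pl N (v^3))/v + / (2*INR(S N)^2) * (INR (2*S N) * v^(2*S N)/v) - /(3*INR (S N)^2) * (INR (3 * S N) * v^(3*S N)/v)).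
    { rewrite <- !pow_mult. rewrite !(mult_INR _ (S N)). simpl (INR 2). simpl (INR 3). field. split; auto; lra. }
    rewrite E. eapply is_derive_ext; [| exact H3]. intros t. reflexivity.
Qed.

Lemma Pl_exd N k v : ex_derive (fun v => Pl N (v^k)) v.
Proof.
  apply (ex_derive_comp (Pl N) (fun v => v^k)).
  exists (Dl N (v^k)). apply Pl_der. auto_derive; auto.
Qed.

Lemma low_cont N v : 0 < v -> continuous (fun v => (Pl N (v^2) - Pl N (v^3)) / v) v.
Proof.
  intros Hv. apply cont_of_der. unfold Rdiv. apply ex_derive_mult.
  apply (@ex_derive_minus R_AbsRing R_NormedModule (fun x => Pl N (x^2)) (fun x => Pl N (x^3))); apply Pl_exd. auto_derive. lra.
Qed.

Lemma Tf_cont v : 0 < v -> continuous (fun v => Tf v / v) v.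
Proof. intros Hv. apply cont_of_der. unfold Tf. auto_derive. repeat split; nra. Qed.

Lemma pow_le_self e n : 0 <= e <= 1 -> e ^ S n <= e.
Proof.
  intros He. induction n. simpl; lra.
  change (e ^ S (S n)) with (e * e ^ S n).
  assert (0 <= e ^ S n) by (apply pow_le; lra). nra.
Qed.

Lemma Qs_low N e : 0 < e <= 1 -> Qs N 1 - Qs N e >= Sq N * (1/6 - e^2/2).
Proof.
  intros He. induction N.
  - simpl. lra.
  - change (Sq (S N)) with (Sq N + 1 / (INR (S N))^2). cbn [Qs].
    rewrite !pow1.
    assert (HN : 0 < INR (S N)) by (apply lt_0_INR; lia).
    set (n := INR (S N)) in *.
    assert (A1 : e ^ (2 * S N) <= e^2).
    { rewrite pow_mult. apply pow_le_self. split. apply pow_le; lra. simpl; nra. }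
    assert (A2 : 0 <= e ^ (3 * S N)) by (apply pow_le; lra).
    assert (W : 0 < / n^2) by (apply Rinv_0_lt_compat; nra).
    replace (/ (2 * n^2)) with (/ n^2 / 2) by (field; lra).
    replace (/ (3 * n^2)) with (/ n^2 / 3) by (field; lra).
    replace (1 / n^2) with (/ n^2) by (field; lra).
    set (w := / n^2) in *. nra.
Qed.

Lemma K_low N e : 0 < e <= 1 -> RInt (fun v => Tf v / v) e 1 >= Sq N * (1/6 - e^2/2).
Proof.
  intros He.
  assert (H := Qs_low N e He).
  assert (F : RInt (fun v => (Pl N (v^2) - Pl N (v^3)) / v) e 1 = Qs N 1 - Qs N e).
  { apply FTC. lra. intros; apply Qs_der; lra. intros; apply low_cont; lra. }
  assert (RInt (fun v => (Pl N (v^2) - Pl N (v^3)) / v) e 1 <= RInt (fun v => Tf v / v) e 1).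
  { apply RInt_le. lra. apply ex_RInt_cont. lra. intros; apply low_cont; lra.
    apply ex_RInt_cont. lra. intros; apply Tf_cont; lra.
    intros x Hx. unfold Rdiv. apply Rmult_le_compat_r. left; apply Rinv_0_lt_compat; lra.
    apply T_ge; lra. }
  lra.
Qed.

Lemma K_final e : 0 < e <= 1 -> e^2 <= 1/3 -> RInt (fun v => Tf v / v) e 1 >= PI^2/36 - 2 * e^2.
Proof.
  intros He He2.
  set (X := (RInt (fun v => Tf v / v) e 1 : R)).
  set (c := 1/6 - e^2/2).
  assert (Hc : 0 <= c) by (unfold c; lra).
  assert (HX : forall m, X >= (PI^2/6 - 2 / INR (2*m+1)) * c).
  { intros m. assert (H1 := K_low (S m) e He). assert (H2 := basel m). fold X c in H1.
    assert (Sq (S m) * c >= (PI ^ 2 / 6 - 2 / INR (2 * m + 1)) * c) by (apply Rle_ge, Rmult_le_compat_r; lra).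
    lra. }
  assert (X >= PI^2/6 * c).
  { destruct (Rge_or_gt X (PI^2/6*c)) as [|Hlt]; auto.
    exfalso. set (d := PI^2/6*c - X).
    assert (Hd : 0 < d) by (unfold d; lra).
    destruct (archimed_cor1 (d / (2*c+1))) as [N [HN1 HN2]].
    apply Rdiv_lt_0_compat; lra.
    assert (HNp : 0 < INR N) by (apply lt_0_INR; lia).
    assert (HN3 : INR N <= INR (2*N+1)) by (apply le_INR; lia).
    specialize (HX N).
    assert (2 / INR (2*N+1) * c <= (2*c+1) / INR N).
    { unfold Rdiv. apply Rle_trans with (2 * c * / INR N).
      - replace (2 * / INR (2*N+1) * c) with (2*c * / INR (2*N+1)) by (field; lra).
        apply Rmult_le_compat_l. lra. apply Rinv_le_contravar; lra.
      - apply Rmult_le_compat_r. left; apply Rinv_0_lt_compat; lra. lra. }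
    assert ((2*c+1) / INR N < d).
    { unfold Rdiv. apply (Rmult_lt_reg_r (/ (2*c+1))). apply Rinv_0_lt_compat; lra.
      replace ((2 * c + 1) * / INR N * / (2 * c + 1)) with (/ INR N) by (field; lra). exact HN1. }
    unfold d in *. nra. }
  assert (PI^2 <= 16) by (pose proof PI_4; pose proof PI_RGT_0; nra).
  unfold c in *. nra.
Qed.

Lemma Tf_nonneg v : 0 <= v -> 0 <= Tf v.
Proof. intros. unfold Tf. assert (ln (1+v) <= ln (1+v+v^2)) by (apply ln_le; nra). lra. Qed.

Lemma ln1p_le x : -1 < x -> ln (1 + x) <= x.
Proof. intros. rewrite <- (ln_exp x) at 2. apply ln_le. lra. apply exp_ineq1_le. Qed.

Lemma Tf_split v : 0 < v -> Tf v = ln (1 + v^2/(1+v)).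
Proof. intros. unfold Tf. rewrite <- ln_div by nra. f_equal. field. lra. Qed.

Lemma Tf_le v : 0 < v -> Tf v <= v^2.
Proof.
  intros. rewrite Tf_split by auto.
  assert (0 <= v^2/(1+v)) by (apply Rdiv_le_0_compat; nra).
  eapply Rle_trans. apply ln1p_le; lra.
  unfold Rdiv. rewrite <- (Rmult_1_r (v^2)) at 2. apply Rmult_le_compat_l. nra.
  rewrite <- Rinv_1. apply Rinv_le_contravar; lra.
Qed.

Lemma ln_ge x : 0 < x -> 1 - / x <= ln x.
Proof.
  intros. assert (H1 := ln1p_le (/ x - 1) ltac:(assert (0 < / x) by (apply Rinv_0_lt_compat; lra); lra)).
  replace (1 + (/ x - 1)) with (/ x) in H1 by ring. rewrite ln_Rinv in H1 by lra. lra.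
Qed.

Lemma Tf_ge v : 0 < v <= 1 -> v^2/3 <= Tf v.
Proof.
  intros. rewrite Tf_split by lra.
  assert (0 < 1 + v^2/(1+v)) by (assert (0 <= v^2/(1+v)) by (apply Rdiv_le_0_compat; nra); lra).
  eapply Rle_trans; [| apply ln_ge; auto].
  replace (1 - / (1 + v^2/(1+v))) with (v^2 / (1 + v + v^2)) by (field; nra).
  unfold Rdiv. apply Rmult_le_compat_l. nra. apply Rinv_le_contravar; nra.
Qed.

Lemma Tf_inv u : 0 < u -> Tf u = ln u + Tf (/ u).
Proof.
  intros. unfold Tf.
  assert (0 < / u) by (apply Rinv_0_lt_compat; lra).
  replace (1 + u + u^2) with (u^2 * (1 + / u + (/ u)^2)) by (field; lra).
  replace (1 + u) with (u * (1 + / u)) by (field; lra).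
  rewrite !ln_mult by nra. replace (u^2) with (u*u) by ring. rewrite ln_mult by lra. ring.
Qed.

Lemma Tf_upper b : 1 <= b -> Tf b <= ln b + 1.
Proof.
  intros. rewrite Tf_inv by lra.
  assert (0 < / b <= 1) by (split; [apply Rinv_0_lt_compat; lra | rewrite <- Rinv_1; apply Rinv_le_contravar; lra]).
  assert (Tf (/ b) <= (/ b)^2) by (apply Tf_le; lra).
  assert ((/b)^2 <= 1) by nra. lra.
Qed.

Lemma expn_bounds z : 0 < z -> 0 < exp (- z) < 1.
Proof. intros. split. apply exp_pos. rewrite <- exp_0. apply exp_increasing. lra. Qed.

Lemma beta_pos u : 0 < u < 1 -> 0 < u * (4 - 3 * u) /\ 0 < beta u.
Proof.
  intros. assert (0 < u * (4 - 3*u)) by nra. split; auto.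
  unfold beta. assert (0 <= sqrt (u * (4 - 3*u))) by apply sqrt_pos. lra.
Qed.

Lemma beta_le1 u : 0 < u < 1 -> beta u <= 1.
Proof.
  intros. unfold beta.
  assert (sqrt (u * (4 - 3*u)) <= 2 - u).
  { rewrite <- (sqrt_pow2 (2 - u)) by lra. apply sqrt_le_1_alt. nra. }
  lra.
Qed.

Lemma g_cont z : 0 < z -> continuous g z.
Proof.
  intros Hz. apply cont_of_der. unfold g.
  destruct (expn_bounds z Hz).
  destruct (beta_pos (1 - exp (- z))) as [B1 B2]. lra.
  unfold beta in B2.
  unfold beta. unfold Rminus, Rdiv in *. auto_derive. repeat split; try lra.
Qed.

Lemma g_nonneg z : 0 < z -> 0 <= g z.
Proof.
  intros Hz. destruct (expn_bounds z Hz). unfold g.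
  destruct (beta_pos (1 - exp (- z))) as [B1 B2]. lra.
  assert (ln (beta (1 - exp (- z))) <= ln 1) by (apply ln_le; auto; apply beta_le1; lra).
  rewrite ln_1 in H1. lra.
Qed.

Lemma Tf_pos u : 0 < u -> 0 < Tf u.
Proof. intros. unfold Tf. assert (ln (1+u) < ln (1+u+u^2)) by (apply ln_increasing; nra). lra. Qed.

Lemma g_T u : 0 < u -> g (Tf u) = Tf u - ln u.
Proof.
  intros Hu. unfold g, Tf.
  set (D := 1 + u + u^2).
  assert (HD : 0 < D) by (unfold D; nra).
  assert (E1 : exp (- (ln D - ln (1 + u))) = (1 + u) / D).
  { replace (- (ln D - ln (1+u))) with (ln ((1+u) / D)) by (rewrite ln_div by lra; ring).
    apply exp_ln. apply Rdiv_lt_0_compat; lra. }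
  rewrite E1.
  assert (E2 : beta (1 - (1 + u) / D) = u * (1 + u) / D).
  { unfold beta.
    replace ((1 - (1 + u) / D) * (4 - 3 * (1 - (1 + u) / D))) with ((u * (2 + u) / D)^2)
      by (unfold D; field; nra).
    rewrite sqrt_pow2. unfold D; field; nra.
    apply Rdiv_le_0_compat; nra. }
  rewrite E2. rewrite ln_div by nra. rewrite ln_mult by lra. ring.
Qed.

Definition dT (u : R) : R := (1 + 2*u)/(1+u+u^2) - 1/(1+u).
Definition Phi (u : R) : R := Tf u ^2/2 - Tf u * ln u.
Definition dPhi (u : R) : R := Tf u * dT u - dT u * ln u - Tf u / u.

Lemma Tf_der u : 0 < u -> is_derive Tf u (dT u).
Proof. intros. unfold Tf, dT. auto_derive. repeat split; nra. toR. field. split; nra. Qed.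

Lemma dT_cont u : 0 < u -> continuous dT u.
Proof. intros. apply cont_of_der. unfold dT. auto_derive. repeat split; nra. Qed.

Lemma Phi_der u : 0 < u -> is_derive Phi u (dPhi u).
Proof.
  intros. unfold Phi, dPhi.
  assert (H1 := Tf_der u H).
  unfold Tf, dT in *. auto_derive. repeat split; nra. replace (u * (u * 1)) with (u^2) by ring. toR. field. split; nra.
Qed.

Lemma dPhi_cont u : 0 < u -> continuous dPhi u.
Proof. intros. apply cont_of_der. unfold dPhi, dT, Tf. auto_derive. repeat split; nra. Qed.

Lemma TfI_cont u : 0 < u -> continuous (fun u => Tf (/ u) / u) u.
Proof.
  intros. apply cont_of_der. unfold Tf. assert (0 < / u) by (apply Rinv_0_lt_compat; lra).
  auto_derive. repeat split; try nra.
Qed.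

Lemma lnu_cont u : 0 < u -> continuous (fun u => ln u / u) u.
Proof. intros. apply cont_of_der. auto_derive. repeat split; lra. Qed.

Lemma change1 a b : 0 < a <= b -> RInt g (Tf a) (Tf b) = RInt (fun u => dT u * g (Tf u)) a b.
Proof.
  intros Hab. symmetry.
  apply (RInt_comp g Tf dT a b).
  - intros x Hx. rewrite Rmin_left in Hx by lra. rewrite Rmax_right in Hx by lra.
    apply g_cont. apply Tf_pos. lra.
  - intros x Hx. rewrite Rmin_left in Hx by lra. rewrite Rmax_right in Hx by lra.
    split. apply Tf_der; lra. apply dT_cont; lra.
Qed.

Lemma Tfdiv_cont u : 0 < u -> continuous (fun v => Tf v / v) u.
Proof. apply Tf_cont. Qed.

Lemma change2 b : 1 <= b -> RInt (fun u => Tf (/ u) / u) 1 b = RInt (fun v => Tf v / v) (/ b) 1.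
Proof.
  intros Hb.
  assert (H := RInt_comp (fun v => Tf v / v) (fun u => / u) (fun u => - / u^2) 1 b).
  cbv beta in H. rewrite Rinv_1 in H.
  rewrite <- (opp_RInt_swap (fun v => Tf v / v) 1 (/ b)).
  rewrite <- H.
  - rewrite <- RInt_opp.
    + apply RInt_ext. intros x Hx. rewrite Rmin_left in Hx by lra. rewrite Rmax_right in Hx by lra.
      unfold scal, opp; simpl. unfold mult; simpl. toR. field. lra.
    + apply ex_RInt_cont. lra. intros x Hx. apply cont_of_der. unfold scal; simpl; unfold mult; simpl. unfold Tf. assert (0 < / x) by (apply Rinv_0_lt_compat; lra). auto_derive. repeat split; try nra.
  - intros x Hx. rewrite Rmin_left in Hx by lra. rewrite Rmax_right in Hx by lra.
    apply Tf_cont. apply Rinv_0_lt_compat; lra.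
  - intros x Hx. rewrite Rmin_left in Hx by lra. rewrite Rmax_right in Hx by lra.
    split. auto_derive. lra. toR. field. lra.
    apply cont_of_der. auto_derive. repeat split; nra.
  - apply ex_RInt_swap. apply ex_RInt_cont. assert (/ b <= 1) by (rewrite <- Rinv_1; apply Rinv_le_contravar; lra). lra.
    intros x Hx. apply Tf_cont. assert (0 < / b) by (apply Rinv_0_lt_compat; lra). lra.
Qed.

Lemma exTfdiv a b : 0 < a <= b -> ex_RInt (fun v => Tf v / v) a b.
Proof. intros. apply ex_RInt_cont. lra. intros; apply Tf_cont; lra. Qed.

Lemma identity a b : 0 < a <= 1 -> 1 <= b ->
  RInt g (Tf a) (Tf b) = Phi b - Phi a + RInt (fun v => Tf v / v) a 1 + ln b ^ 2 / 2
     + RInt (fun v => Tf v / v) (/ b) 1.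
Proof.
  intros Ha Hb.
  rewrite change1 by lra.
  rewrite (RInt_ext _ (fun u => 1 * dPhi u + 1 * (Tf u / u))).
  2: { intros x Hx. rewrite Rmin_left in Hx by lra. rewrite Rmax_right in Hx by lra.
       rewrite g_T by lra. unfold dPhi. toR. field. lra. }
  rewrite RInt_lin.
  2: { apply ex_RInt_cont. lra. intros; apply dPhi_cont; lra. }
  2: { apply exTfdiv. lra. }
  rewrite (FTC Phi dPhi a b). 2: lra. 2: intros; apply Phi_der; lra. 2: intros; apply dPhi_cont; lra.
  rewrite <- (RInt_Chasles (fun v => Tf v / v) a 1 b). 2: apply exTfdiv; lra. 2: apply exTfdiv; lra.
  rewrite (RInt_ext (fun v => Tf v / v) (fun u => 1 * (ln u / u) + 1 * (Tf (/ u) / u)) 1 b).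
  2: { intros x Hx. rewrite Rmin_left in Hx by lra. rewrite Rmax_right in Hx by lra.
       rewrite (Tf_inv x) by lra. toR. field. lra. }
  rewrite RInt_lin.
  2: { apply ex_RInt_cont. lra. intros; apply lnu_cont; lra. }
  2: { apply ex_RInt_cont. lra. intros; apply TfI_cont; lra. }
  rewrite (FTC (fun u => ln u ^ 2 / 2) (fun u => ln u / u) 1 b). 2: lra.
  2: { intros x Hx. auto_derive. lra. toR. field. lra. }
  2: { intros; apply lnu_cont; lra. }
  rewrite change2 by lra. rewrite ln_1. match goal with |- context [plus ?x ?y] => change (plus x y) with (Rplus x y) end. toR. rewrite pow_i by lia. lra.
Qed.

Lemma main_bound a b : 0 < a <= 1 -> a^2 <= 1/3 -> 1 <= b -> (/ b)^2 <= 1/3 ->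
  RInt g (Tf a) (Tf b) >= PI^2/18 - 2 * a^2 - 2 * (/ b)^2 - a^4/2 + a^2 * ln a.
Proof.
  intros Ha Ha2 Hb Hb2.
  rewrite identity by lra.
  assert (Hib : 0 < / b <= 1) by (split; [apply Rinv_0_lt_compat; lra | rewrite <- Rinv_1; apply Rinv_le_contravar; lra]).
  assert (K1 := K_final a Ha Ha2). assert (K2 := K_final (/ b) Hib Hb2).
  assert (EE : Phi b + ln b ^ 2 / 2 = (Tf b - ln b)^2/2) by (unfold Phi; field).
  assert (0 <= (Tf b - ln b)^2/2) by (apply Rmult_le_pos; [apply pow2_ge_0 | lra]).
  assert (T1 := Tf_nonneg a ltac:(lra)). assert (T2 := Tf_le a ltac:(lra)).
  assert (L : ln a <= 0) by (rewrite <- ln_1; apply ln_le; lra).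
  assert (Tf a ^ 2 <= a^4) by (replace (a^4) with ((a^2)^2) by ring; apply pow_incr; lra).
  assert (a^2 * ln a <= Tf a * ln a) by nra.
  unfold Phi in *. lra.
Qed.

Lemma shrink z1 z2 s t : 0 < z1 <= s -> s <= t -> t <= z2 -> RInt g s t <= RInt g z1 z2.
Proof.
  intros H1 H2 H3.
  assert (ex : forall u v, z1 <= u <= v -> v <= z2 -> ex_RInt g u v).
  { intros u v Hu Hv. apply ex_RInt_cont. lra. intros; apply g_cont; lra. }
  rewrite <- (RInt_Chasles g z1 s z2). 2: apply ex; lra. 2: apply ex; lra.
  rewrite <- (RInt_Chasles g s t z2). 2: apply ex; lra. 2: apply ex; lra.
  assert (0 <= RInt g z1 s) by (apply RInt_ge_0; [lra | apply ex; lra | intros; apply g_nonneg; lra]).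
  assert (0 <= RInt g t z2) by (apply RInt_ge_0; [lra | apply ex; lra | intros; apply g_nonneg; lra]).
  unfold plus; simpl. lra.
Qed.

Lemma ceil_bounds x : x <= IZR (ceilZ x) < x + 1.
Proof.
  unfold ceilZ. destruct (base_Int_part (- x)) as [H1 H2]. rewrite opp_IZR. lra.
Qed.

Lemma floor_bounds y : y - 1 < IZR (floorZ y) <= y.
Proof. unfold floorZ. destruct (base_Int_part y) as [H1 H2]. lra. Qed.

Lemma exp2_le9 : exp 2 <= 9.
Proof.
  replace 2 with (1 + 1) by ring. rewrite exp_plus.
  pose proof exp_le_3. pose proof (exp_pos 1). nra.
Qed.

Lemma exp4_le100 : exp 4 <= 100.
Proof.
  replace 4 with (2 + 2) by ring. rewrite exp_plus.
  pose proof exp2_le9. pose proof (exp_pos 2). nra.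
Qed.

Lemma exp3_le27 : exp 3 <= 27.
Proof.
  replace 3 with (2 + 1) by ring. rewrite exp_plus.
  pose proof exp2_le9. pose proof exp_le_3. pose proof (exp_pos 2). pose proof (exp_pos 1). nra.
Qed.

Lemma ln_ge_of_exp c y : 0 < y -> exp c <= y -> c <= ln y.
Proof. intros. rewrite <- (ln_exp c). apply ln_le; auto. apply exp_pos. Qed.

Lemma ln_sqrt' q : 0 < q -> ln (sqrt q) = ln q / 2.
Proof.
  intros. assert (0 < sqrt q) by (apply sqrt_lt_R0; lra).
  assert (ln q = ln (sqrt q) + ln (sqrt q)) by (rewrite <- ln_mult by lra; rewrite sqrt_sqrt; lra).
  lra.
Qed.

Lemma exp_mono x y : x <= y -> exp x <= exp y.
Proof. intros [H|H]. left; apply exp_increasing; auto. subst; lra. Qed.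

Theorem lemma9 :
  exists C1 : R,
    forall p : R, 0 < p < 0.1 ->
      let q := - ln (1 - p) in
      let A := IZR (ceilZ (1 / sqrt q)) in
      let B := IZR (floorZ (/ q * ln (/ q))) in
      RInt g (A * q) (B * q) >= PI ^ 2 / 18 - C1 * sqrt q * ln (/ q).
Proof.
  exists 20. intros p Hp q A B.
  assert (Hq0 : 0 < q).
  { unfold q. assert (ln (1 - p) < ln 1) by (apply ln_increasing; lra). rewrite ln_1 in H. lra. }
  assert (Hq1 : q <= 1/9).
  { unfold q. assert (H := ln_ge (1 - p) ltac:(lra)).
    assert (/ (1 - p) <= 10/9).
    { replace (10/9) with (/ (9/10)) by field. apply Rinv_le_contravar; lra. }
    lra. }
  set (L := ln (/ q)).
  assert (HL : 2 <= L).
  { unfold L. apply ln_ge_of_exp. apply Rinv_0_lt_compat; lra.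
    eapply Rle_trans. apply exp2_le9.
    replace 9 with (/ (1/9)) by field. apply Rinv_le_contravar; lra. }
  set (s := sqrt q).
  assert (Hs0 : 0 < s) by (apply sqrt_lt_R0; lra).
  assert (Hss : s * s = q) by (apply sqrt_sqrt; lra).
  assert (Hs1 : s <= 1/3).
  { unfold s. rewrite <- (sqrt_pow2 (1/3)) by lra. apply sqrt_le_1_alt. lra. }
  assert (Hqs : q <= s) by nra.
  destruct (ceil_bounds (1 / s)) as [A1 A2]. change (IZR (ceilZ (1 / s))) with A in A1, A2.
  destruct (floor_bounds (/ q * L)) as [B1 B2]. change (IZR (floorZ (/ q * L))) with B in B1, B2.
  set (z1 := A * q). set (z2 := B * q).
  assert (Z1a : s <= z1).
  { unfold z1. replace s with (1 / s * q) by (rewrite <- Hss; field; lra).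
    apply Rmult_le_compat_r. lra. lra. }
  assert (Z1b : z1 <= s + q).
  { unfold z1. replace (s + q) with ((1 / s + 1) * q) by (rewrite <- Hss; field; lra).
    apply Rmult_le_compat_r; lra. }
  assert (Z2a : L - q <= z2).
  { unfold z2. replace (L - q) with ((/ q * L - 1) * q) by (field; lra).
    apply Rmult_le_compat_r; lra. }
  assert (Z2b : z2 <= L).
  { unfold z2. assert (H : B * q <= / q * L * q) by (apply Rmult_le_compat_r; lra).
    replace (/ q * L * q) with L in H by (field; lra). exact H. }
  assert (PI2 : PI^2 <= 16) by (pose proof PI_4; pose proof PI_RGT_0; nra).
  destruct (Rle_or_lt q (1/100)) as [Hsmall | Hbig].
  -
    assert (Hs2 : s <= 1/10).
    { unfold s. rewrite <- (sqrt_pow2 (1/10)) by lra. apply sqrt_le_1_alt. lra. }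
    set (a := sqrt (3 * z1)).
    assert (Ha2 : a^2 = 3 * z1) by (unfold a; apply pow2_sqrt; lra).
    assert (Ha0 : 0 < a) by (unfold a; apply sqrt_lt_R0; lra).
    assert (Ha3 : a^2 <= 1/3) by lra.
    assert (Ha1 : a <= 1) by nra.
    assert (HL4 : 4 <= L).
    { unfold L. apply ln_ge_of_exp. apply Rinv_0_lt_compat; lra.
      eapply Rle_trans. apply exp4_le100.
      replace 100 with (/ (1/100)) by field. apply Rinv_le_contravar; lra. }
    set (b := exp (z2 - 1)).
    assert (Hb1 : 2.99 <= b) by (unfold b; pose proof (exp_ineq1_le (z2 - 1)); lra).
    assert (Hib : / b <= 1 / 2.99) by (unfold Rdiv; rewrite Rmult_1_l; apply Rinv_le_contravar; lra).
    assert (Hib0 : 0 < / b) by (apply Rinv_0_lt_compat; lra).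
    assert (Hb2 : (/ b)^2 <= 1/3) by nra.
    assert (Tfa1 : z1 <= Tf a) by (pose proof (Tf_ge a ltac:(lra)); lra).
    assert (Tfa2 : Tf a <= a^2) by (apply Tf_le; lra).
    assert (lnb : ln b = z2 - 1) by (unfold b; apply ln_exp).
    assert (Tfb1 : Tf b <= z2) by (pose proof (Tf_upper b ltac:(lra)); lra).
    assert (Tfb2 : ln b <= Tf b) by (rewrite (Tf_inv b) by lra; pose proof (Tf_nonneg (/ b) ltac:(lra)); lra).
    assert (Hsh := shrink z1 z2 (Tf a) (Tf b) ltac:(lra) ltac:(lra) ltac:(lra)).
    assert (Hmb := main_bound a b ltac:(lra) Ha3 ltac:(lra) Hb2).
    assert (Ha4 : a^4 <= a^2) by (replace (a^4) with (a^2 * a^2) by ring; nra).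
    assert (lna : ln a = ln (3 * z1) / 2) by (unfold a; apply ln_sqrt'; lra).
    assert (lns : ln s = - L / 2) by (unfold s, L; rewrite ln_sqrt' by lra; rewrite ln_Rinv by lra; lra).
    assert (l3 : ln s <= ln (3 * z1)) by (apply ln_le; lra).
    assert (Hal : a^2 * ln a >= - (3/2) * s * L).
    { assert (ln a >= - L / 4) by lra.
      assert (a^2 * ln a >= a^2 * (- L / 4)) by (apply Rle_ge, Rmult_le_compat_l; nra).
      nra. }
    assert (Eb : (/ b)^2 = exp (2 - 2 * z2)).
    { unfold b. rewrite <- exp_Ropp. simpl. rewrite Rmult_1_r, <- exp_plus. f_equal. ring. }
    assert (EL : exp (- L) = q).
    { unfold L. rewrite ln_Rinv by lra. rewrite Ropp_involutive. apply exp_ln; lra. }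
    assert (Hbq : (/ b)^2 <= 27 * q^2).
    { rewrite Eb. apply Rle_trans with (exp (2 + 2*q) * (exp (- L) * exp (- L))).
      rewrite <- !exp_plus. apply exp_mono. lra.
      rewrite EL. assert (exp (2 + 2*q) <= 27).
      { eapply Rle_trans; [| apply exp3_le27]. apply exp_mono. lra. }
      assert (0 <= q * q) by nra. simpl. nra. }
    assert (Hbq2 : 2 * (/ b)^2 <= s).
    { assert (q^2 <= q / 100) by (simpl; nra). lra. }
    assert (s * L >= 2 * s) by nra. fold s L. lra.
  -
    assert (Hs2 : 1/10 < s).
    { unfold s. rewrite <- (sqrt_pow2 (1/10)) by lra. apply sqrt_lt_1_alt. lra. }
    assert (0 <= RInt g z1 z2).
    { apply RInt_ge_0. lra. apply ex_RInt_cont. lra. intros; apply g_cont; lra.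
      intros; apply g_nonneg; lra. }
    assert (20 * s * L >= 4) by nra.
    fold s L. lra.
Qed.
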